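(* Let $\Lambda$ be a lattice with basis $B_\Lambda$; for $i=1,2$ let $Z_i$ be a lattice with orthonormal basis $B_i$ and $\iota_i:\Lambda\hookrightarrow Z_i$ a lattice embedding. Suppose that $\langle\iota_1(x),e\rangle\in\{0,1\}$ for all $x\in B_\Lambda$, $e\in B_1$; that for every $e\in B_1$ there exists $x\in B_\Lambda$ with $\langle\iota_1(x),e\rangle\neq0$; and that for $i=1,2$ the restriction map $Z_i^*\to\Lambda^*$ (via $\iota_i$) induces a surjection $r_i:\mathrm{Short}(Z_i)\to\mathrm{Short}(\Lambda)$. Then there exists a lattice embedding $\iota:Z_1\hookrightarrow Z_2$ such that $\iota_2=\iota\circ\iota_1$.
   Context: A lattice is a finitely generated free abelian group with a non-degenerate symmetric $\mathbb{Q}$-valued bilinear form; a lattice embedding is an injective homomorphism preserving the form. For an integral positive definite lattice $\Lambda$ (here $\Lambda$ embeds in $Z_1$, so it is such), $\Lambda^*=\{x\in\Lambda\otimes\mathbb{Q}:\langle x,y\rangle\in\mathbb{Z}\ \forall y\}$, $\mathrm{Char}(\Lambda)=\{\chi\in\Lambda^*:\langle\chi,y\rangle\equiv\langle y,y\rangle\pmod 2\ \forall y\in\Lambda\}$, and $\mathrm{Short}(\Lambda)$ is the set of $\chi\in\mathrm{Char}(\Lambda)$ with $\langle\chi,\chi\rangle\le\langle\chi',\chi'\rangle$ for all $\chi'\in\chi+2\Lambda$. For $Z_i$ with orthonormal basis $B_i$, $\mathrm{Short}(Z_i)$ consists of the vectors $\chi$ with $\langle\chi,e\rangle=\pm1$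 for all $e\in B_i$. *)

(* Defs.v *)
From HB Require Import structures.
From mathcomp Require Import all_boot all_order all_algebra.
Set Implicit Arguments. Unset Strict Implicit. Unset Printing Implicit Defensive.
Import Order.TTheory GRing.Theory Num.Theory.
Local Open Scope ring_scope.

(* A lattice of rank n is Z^n (coordinates w.r.t. the basis B_Lambda) equipped
   with a Gram matrix G (symmetric, non-degenerate, rational entries).
   Vectors of Lambda (x) Q are rational row vectors. *)

Definition ratm (m n : nat) (A : 'M[int]_(m, n)) : 'M[rat]_(m, n) :=
  map_mx (fun z : int => z%:~R) A.

Definition bil (n : nat) (G : 'M[rat]_n) (x y : 'rV[rat]_n) : rat :=
  (x *m G *m y^T) 0 0.

Definition is_lattice (n : nat) (G : 'M[rat]_n) : Prop :=
  G^T = G /\ G \in unitmx.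

Definition lattice_embedding (n m : nat) (G : 'M[rat]_n) (H : 'M[rat]_m)
    (A : 'M[int]_(n, m)) : Prop :=
  (forall y z : 'rV[int]_n, y *m A = z *m A -> y = z) /\
  (forall y z : 'rV[int]_n,
      bil H (ratm (y *m A)) (ratm (z *m A)) = bil G (ratm y) (ratm z)).

Definition in_dual (n : nat) (G : 'M[rat]_n) (x : 'rV[rat]_n) : Prop :=
  forall y : 'rV[int]_n, exists k : int, bil G x (ratm y) = k%:~R.

Definition is_char (n : nat) (G : 'M[rat]_n) (x : 'rV[rat]_n) : Prop :=
  in_dual G x /\
  forall y : 'rV[int]_n, exists k : int,
    bil G x (ratm y) - bil G (ratm y) (ratm y) = (2 * k)%:~R.

Definition is_short (n : nat) (G : 'M[rat]_n) (x : 'rV[rat]_n) : Prop :=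
  is_char G x /\
  forall y : 'rV[int]_n,
    bil G x x <= bil G (x + 2%:R *: ratm y) (x + 2%:R *: ratm y).

(* restriction map Z^* -> Lambda^* along the embedding A : (Z^n,G) -> (Z^m,H):
   chi |-> the element xi of Lambda (x) Q with <xi, y>_G = <chi, y A>_H. *)
Definition restr (n m : nat) (G : 'M[rat]_n) (H : 'M[rat]_m)
    (A : 'M[int]_(n, m)) (chi : 'rV[rat]_m) : 'rV[rat]_n :=
  chi *m H *m (ratm A)^T *m invmx G.

Definition induces_short_surj (n m : nat) (G : 'M[rat]_n) (H : 'M[rat]_m)
    (A : 'M[int]_(n, m)) : Prop :=
  (forall chi, is_short H chi -> is_short G (restr G H A chi)) /\
  (forall xi, is_short G xi -> exists2 chi, is_short H chi & restr G H A chi = xi).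

(* Main.v *)
Require Import Defs.
From HB Require Import structures.
From mathcomp Require Import all_boot all_order all_algebra.
From mathcomp Require Import zify ring.
Import Order.TTheory GRing.Theory Num.Theory.
Local Open Scope ring_scope.
Set Implicit Arguments. Unset Strict Implicit.

Lemma ratmE m n (A : 'M[int]_(m,n)) i j : ratm A i j = (A i j)%:~R.
Proof. by rewrite mxE. Qed.

Lemma ratmM m n p (A : 'M[int]_(m,n)) (B : 'M[int]_(n,p)) :
  ratm (A *m B) = ratm A *m ratm B.
Proof.
apply/matrixP => i j; rewrite !mxE rmorph_sum; apply: eq_bigr => k _.
by rewrite !mxE rmorphM.
Qed.

Lemma ratmT m n (A : 'M[int]_(m,n)) : ratm A^T = (ratm A)^T.
Proof. by apply/matrixP => i j; rewrite !mxE. Qed.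

Lemma ratm_inj m n : injective (@ratm m n).
Proof.
move=> A B H; apply/matrixP => i j.
by move/matrixP: H => /(_ i j); rewrite !mxE => /intr_inj.
Qed.

Lemma bil1 m (x y : 'rV[rat]_m) : bil 1%:M x y = \sum_j x 0 j * y 0 j.
Proof. by rewrite /bil mulmx1 mxE; apply: eq_bigr => j _; rewrite mxE. Qed.

Definition signs {m} (c : 'rV[int]_m) := forall j, c 0 j = 1 \/ c 0 j = -1.

Lemma short_of_signs m (c : 'rV[int]_m) : signs c -> is_short 1%:M (ratm c).
Proof.
move=> hc; split; [split|].
- move=> y; exists (\sum_j c 0 j * y 0 j); rewrite bil1 rmorph_sum.
  by apply: eq_bigr => j _; rewrite !mxE rmorphM.
- move=> y.
  have hj : forall j, exists t : int, c 0 j * y 0 j - y 0 j * y 0 j == 2 * t.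
    move=> j; have [t [->|->]] : exists t : int, y 0 j = 2 * t \/ y 0 j = 2 * t + 1.
      exists (divz (y 0 j) 2); have := divz_eq (y 0 j) 2.
      have := modz_ge0 (y 0 j) (isT : (2:int) != 0).
      have := ltz_pmod (y 0 j) (isT : (0 < (2:int))). lia.
    + case: (hc j) => ->; [exists (t - 2*t*t) | exists (-t - 2*t*t)]; apply/eqP; ring.
    + case: (hc j) => ->; [exists (- t - 2*t*t) | exists (-3*t - 1 - 2*t*t)]; apply/eqP; ring.
  exists (\sum_j xchoose (hj j)).
  rewrite !bil1 -sumrB mulr_sumr rmorph_sum; apply: eq_bigr => j _.
  rewrite !mxE /= -!intrM -intrB; congr (_%:~R).
  by have /eqP := xchooseP (hj j) .
- move=> y; rewrite !bil1; apply: ler_sum => j _; rewrite !mxE.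
  rewrite -[2%:R]/((2:int)%:~R) -!intrM -intrD -intrM ler_int.
  case: (hc j) => ->; nia.
Qed.

Lemma row_delta_dot m (x : 'rV[rat]_m) j :
  \sum_i x 0 i * ratm (delta_mx 0 j : 'rV[int]_m) 0 i = x 0 j.
Proof.
rewrite (bigD1 j) //= big1 ?addr0; first by rewrite !mxE !eqxx mulr1.
by move=> i hij; rewrite !mxE (negbTE hij) andbF mulr0.
Qed.

Lemma signs_of_short m (x : 'rV[rat]_m) : is_short 1%:M x ->
  exists c : 'rV[int]_m, signs c /\ x = ratm c.
Proof.
move=> [[hd hc] hs].
have hj : forall j, exists t : int, ((t == 1) || (t == -1)) && (x 0 j == t%:~R).
  move=> j.
  have [k hk] := hd (delta_mx 0 j); rewrite bil1 row_delta_dot in hk.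
  have [k' hk'] := hc (delta_mx 0 j); rewrite !bil1 !row_delta_dot in hk'.
  rewrite hk !mxE !eqxx /= in hk'.
  have e1 : k - 1 = 2 * k' by apply: (@intr_inj rat); rewrite intrB hk'.
  have q : forall s : int, (s == 1) || (s == -1) ->
      bil 1%:M x x <= bil 1%:M (x + 2%:R *: ratm (s *: delta_mx 0 j)) (x + 2%:R *: ratm (s *: delta_mx 0 j)) ->
      (0 <= 4 * s * k + 4)%R.
    move=> s hs1 hle.
    rewrite !bil1 -subr_ge0 -sumrB in hle.
    rewrite (bigD1 j) //= big1 ?addr0 in hle; last first.
      by move=> i hij; rewrite !mxE (negbTE hij) andbF mulr0 mulr0 addr0 subrr.
    rewrite !mxE !eqxx hk /= mulr1 in hle.
    rewrite -(ler_int rat) rmorph0.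
    have -> : (4 * s * k + 4)%:~R = (k%:~R + 2%:R * s%:~R) * (k%:~R + 2%:R * s%:~R) - (k%:~R * k%:~R : rat).
      case/orP: hs1 => /eqP ->; rewrite ?intrD ?intrM /=; ring.
    done.
  have q1 := q 1 isT (hs _); have q2 := q (-1) isT (hs _).
  exists k; apply/andP; split; last by rewrite hk.
  apply/orP; lia.
exists (\row_j xchoose (hj j)); split.
  by move=> j; rewrite mxE; have /andP[/orP[/eqP->|/eqP->] _] := xchooseP (hj j); [left|right].
apply/matrixP => i j; rewrite (ord1 i) !mxE.
by have /andP[_ /eqP] := xchooseP (hj j).
Qed.

Lemma cube n ma mb (G : 'M[rat]_n) (A : 'M[int]_(n,ma)) (B : 'M[int]_(n,mb)) :
  G \in unitmx -> induces_short_surj G 1%:M A -> induces_short_surj G 1%:M B ->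
  forall c : 'rV[int]_mb, signs c -> exists s : 'rV[int]_ma, signs s /\ s *m A^T = c *m B^T.
Proof.
move=> hG [_ hA] [hB _] c hc.
have := hB _ (short_of_signs hc) => /hA [sig hsig esig].
have [s [hs es]] := signs_of_short hsig; exists s; split => //.
apply: ratm_inj; rewrite !ratmM !ratmT.
move: esig; rewrite es /restr => /(congr1 (fun X => X *m G)).
by rewrite !mulmxKV // !mulmx1.
Qed.

Definition F n m (A : 'M[int]_(n,m)) (l : 'rV[int]_n) : int :=
  \sum_k `|(l *m A) 0 k|.

Lemma Fle n ma mb (A : 'M[int]_(n,ma)) (B : 'M[int]_(n,mb)) :
  (forall c : 'rV[int]_mb, signs c -> exists s : 'rV[int]_ma, signs s /\ s *m A^T = c *m B^T) ->
  forall l, F B l <= F A l.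
Proof.
move=> h l.
pose c : 'rV[int]_mb := \row_k (if 0 <= (l *m B) 0 k then 1 else -1).
have hc : signs c by move=> j; rewrite mxE; case: ifP; [left|right].
have [s [hs es]] := h c hc.
have e1 : F B l = (l *m (c *m B^T)^T) 0 0.
  rewrite trmx_mul trmxK mulmxA /F mxE; apply: eq_bigr => k _.
  rewrite !mxE; case: ifP => hk; first by rewrite ger0_norm // mulr1.
  by rewrite ltr0_norm ?mulrN1 // ltNge hk.
rewrite e1 -es trmx_mul trmxK mulmxA mxE /F; apply: ler_sum => e _.
rewrite !mxE; case: (hs e) => ->; rewrite ?mulr1 ?mulrN1 ?ler_norm //.
by rewrite -normrN ler_norm.
Qed.

Lemma gram n m (G : 'M[rat]_n) (A : 'M[int]_(n,m)) : lattice_embedding G 1%:M A ->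
  forall x y, G x y = (\sum_k A x k * A y k)%:~R.
Proof.
move=> [_ h] x y; have := h (delta_mx 0 x) (delta_mx 0 y).
rewrite bil1 => e.
have -> : G x y = bil G (ratm (delta_mx 0 x)) (ratm (delta_mx 0 y)).
  rewrite /bil mxE (bigD1 y) //= big1 ?addr0.
    rewrite !mxE !eqxx mulr1 (bigD1 x) //= big1 ?addr0; first by rewrite !mxE !eqxx mul1r.
    by move=> i hi; rewrite !mxE (negbTE hi) mul0r.
  by move=> i hi; rewrite !mxE (negbTE hi) /= mulr0.
rewrite -e rmorph_sum; apply: eq_bigr => k _.
by rewrite rmorphM /= !ratmE -!rowE !mxE.
Qed.

Lemma match_lemma (I J : finType) (V : eqType) (p : I -> V) (q : J -> V) (v0 : V) :
  (forall i, p i != v0) ->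
  (forall v, v != v0 -> #|[pred i | p i == v]| = #|[pred j | q j == v]|) ->
  exists f : I -> J, [/\ injective f, forall i, q (f i) = p i &
                         forall j, q j != v0 -> exists i, f i = j].
Proof.
move=> hp hc.
pose EI v := enum [pred i | p i == v]; pose EJ v := enum [pred j | q j == v].
have sz v : v != v0 -> size (EI v) = size (EJ v) by move=> hv; rewrite -!cardE hc.
case: (pickP (fun _ : J => true)) => [j0 _|hJ]; last first.
  have hI : forall i : I, False.
    move=> i; have hin : i \in EI (p i) by rewrite mem_enum inE.
    have := sz _ (hp i); case E: (EJ (p i)) => [|j l]; last by have := hJ j.
    by move/size0nil => e; rewrite e in hin.
  exists (fun i => match hI i with end); split; first by move=> i; case: (hI i).
    by move=> i; case: (hI i).
  by move=> j; have := hJ j.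
pose f i := nth j0 (EJ (p i)) (index i (EI (p i))).
have hlt i : (index i (EI (p i)) < size (EJ (p i)))%N.
  by rewrite -sz ?hp // index_mem mem_enum inE.
have hq i : q (f i) = p i.
  have : f i \in EJ (p i) by apply: mem_nth.
  by rewrite mem_enum inE => /eqP.
exists f; split => //.
- move=> i i' e.
  have ep : p i = p i' by rewrite -hq e hq.
  move: e; rewrite /f -ep => /eqP; rewrite nth_uniq ?enum_uniq //; last by rewrite ep.
  move/eqP => ei.
  have hi : i \in EI (p i) by rewrite mem_enum inE.
  have hi' : i' \in EI (p i) by rewrite mem_enum inE ep.
  by rewrite -(nth_index i hi) ei nth_index.
- move=> j hj; set v := q j.
  have hjin : j \in EJ v by rewrite mem_enum inE.
  have ht : (index j (EJ v) < size (EI v))%N by rewrite sz // index_mem.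
  case E: (EI v) ht => [//|i0 s] ht.
  set i := nth i0 (EI v) (index j (EJ v)).
  have hi : i \in EI v by rewrite /i mem_nth // E.
  have pi : p i = v by move: hi; rewrite mem_enum inE => /eqP.
  exists i; rewrite /f pi /i index_uniq ?enum_uniq ?E // ?nth_index //.
Qed.


Definition supp n m (A : 'M[int]_(n,m)) (e : 'I_m) : {set 'I_n} := [set x | A x e != 0].

Definition h01 n m (A : 'M[int]_(n,m)) (W : {set 'I_n}) : int :=
  \sum_e (if supp A e \subset W then (#|supp A e|)%:Z else 0).

Definition rv n (W : {set 'I_n}) (a b : int) : 'rV[int]_n :=
  \row_x (if x \in W then a else b).

Lemma rvA n m (A : 'M[int]_(n,m)) W a b e :
  (rv W a b *m A) 0 e = a * \sum_x (if x \in W then A x e else 0)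
                        + b * \sum_x (if x \in W then 0 else A x e).
Proof.
rewrite mxE !mulr_sumr -big_split; apply: eq_bigr => x _ /=.
by rewrite mxE; case: ifP => _; rewrite ?mulr0 ?addr0 ?add0r.
Qed.

Lemma hF n m (A : 'M[int]_(n,m)) (W : {set 'I_n}) :
  (forall x e, A x e = 0 \/ A x e = 1) ->
  2 * h01 A W = 2 * F A (rv W 1 0) - F A (rv W 1 (n.+1)%:Z) + F A (rv W (-1) (n.+1)%:Z).
Proof.
move=> h01A; rewrite /h01 /F !mulr_sumr -sumrB -big_split /=; apply: eq_bigr => e _.
rewrite !rvA.
set s := \sum_x (if x \in W then A x e else 0).
set t := \sum_x (if x \in W then 0 else A x e).
have s0 : 0 <= s by apply: sumr_ge0 => x _; case: ifP => _ //; case: (h01A x e) => ->.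
have t0 : 0 <= t by apply: sumr_ge0 => x _; case: ifP => _ //; case: (h01A x e) => ->.
have sn : s <= n%:Z.
  rewrite -[n%:Z]natz -[n in n%:R]card_ord -sumr_const; apply: ler_sum => x _.
  by case: ifP => _ //; case: (h01A x e) => ->.
have tW : (t == 0) = (supp A e \subset W).
  apply/idP/idP.
    move=> /eqP ht; apply/subsetP => x; rewrite inE; apply: contraR => hx.
    have hnn : forall y, true -> 0 <= (if y \in W then 0 else A y e).
      by move=> y _; case: ifP => _ //; case: (h01A y e) => ->.
    by have := psumr_eq0P hnn ht (i:=x) isT; rewrite (negbTE hx) => ->.
  move=> hsub; apply/eqP; apply: big1 => x _; case: ifP => // hx.
  by apply/eqP; apply: contraFT hx => hA; apply: (subsetP hsub); rewrite inE.
have ts : supp A e \subset W -> s = #|supp A e|%:Z.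
  move=> hsub; rewrite -natz -sumr_const big_mkcond /=; apply: eq_bigr => x _.
  rewrite inE; case: (h01A x e) => hx; rewrite hx ?eqxx //=.
  by case: ifP. by rewrite (subsetP hsub) // inE hx.
rewrite -tW; case: eqP => ht.
  rewrite ts -?tW ?ht //; rewrite ts -?tW ?ht // in s0 *; rewrite !mul1r !mulr0 !addr0 mulN1r normrN; rewrite ger0_norm //; ring.
have t1 : 1 <= t by lia.
have : (n.+1)%:Z <= (n.+1)%:Z * t by nia.
lia.
Qed.

Definition g01 n m (A : 'M[int]_(n,m)) (U : {set 'I_n}) : int :=
  \sum_e (if supp A e == U then (#|U|)%:Z else 0).

Lemma h_g n m (A : 'M[int]_(n,m)) W : h01 A W = \sum_(U : {set 'I_n} | U \subset W) g01 A U.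
Proof.
rewrite /h01 /g01 exchange_big /=; apply: eq_bigr => e _.
case: ifP => hs.
  rewrite (bigD1 (supp A e)) //= eqxx big1 ?addr0 // => U /andP[_ hU].
  by rewrite eq_sym (negbTE hU).
rewrite big1 // => U hU; case: eqP => // he; by rewrite he hU in hs.
Qed.

Lemma g_eq n m1 m2 (P : 'M[int]_(n,m1)) (Q : 'M[int]_(n,m2)) :
  (forall W, h01 P W = h01 Q W) -> forall U, g01 P U = g01 Q U.
Proof.
move=> hh U.
suff: forall k (V : {set 'I_n}), (#|V| <= k)%N -> g01 P V = g01 Q V by apply; exact: leqnn.
have key : forall (V : {set 'I_n}),
    (forall W : {set 'I_n}, W \subset V -> W != V -> g01 P W = g01 Q W) -> g01 P V = g01 Q V.
  move=> V hW; have := hh V; rewrite !h_g (bigD1 V) ?subxx // [X in _ = X](bigD1 V) ?subxx //.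
  rewrite (eq_bigr (fun W => g01 Q W)); first by move/addIr.
  by move=> W /andP[]; apply: hW.
elim=> [|k IH] V hV; apply: key.
  move=> W hW hWV; have : W \proper V by rewrite properEneq hWV hW.
  by move/proper_card => h; have := leq_trans h hV.
move=> W hW hWV; have : W \proper V by rewrite properEneq hWV hW.
by move/proper_card => h; apply: IH; have := leq_trans h hV; rewrite ltnS.
Qed.

Lemma g_card n m (A : 'M[int]_(n,m)) U :
  g01 A U = #|U|%:Z * #|[pred e | supp A e == U]|%:Z.
Proof.
rewrite /g01 -big_mkcond sumr_const -mulr_natr natz.
by congr (_ * Posz _); apply: eq_card => e.
Qed.

Lemma key01 n m1 m2 (P : 'M[int]_(n,m1)) (Q : 'M[int]_(n,m2)) :
  (forall x e, P x e = 0 \/ P x e = 1) -> (forall x k, Q x k = 0 \/ Q x k = 1) ->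
  (forall l, F P l = F Q l) -> (forall e, exists x, P x e != 0) ->
  exists f : 'I_m1 -> 'I_m2, [/\ injective f, forall x e, Q x (f e) = P x e &
     forall k, (forall e, f e != k) -> forall x, Q x k = 0].
Proof.
move=> hP hQ hF' hnz.
have hh : forall W, h01 P W = h01 Q W.
  move=> W; apply: (@mulfI _ 2) => //; by rewrite !hF // !hF'.
have hg := g_eq hh.
have hp : forall e, supp P e != set0.
  move=> e; have [x hx] := hnz e; apply/set0Pn; exists x; by rewrite inE.
have hc : forall U, U != set0 -> #|[pred e | supp P e == U]| = #|[pred k | supp Q k == U]|.
  move=> U hU; have := hg U; rewrite !g_card => /mulfI.
  have -> : (#|U|%:Z != 0) by rewrite eqz_nat -lt0n card_gt0.
  by move=> /(_ isT) [].
have [f [finj fq fs]] := match_lemma hp hc.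
exists f; split => //.
  move=> x e; have := fq e => /setP /(_ x); rewrite !inE.
  by case: (hP x e) => ->; case: (hQ x (f e)) => ->.
move=> k hk x.
have : supp Q k == set0.
  apply/negPn/negP => /fs [e he]; by have := hk e; rewrite he eqxx.
move=> /eqP /setP /(_ x); rewrite !inE; by case: (hQ x k) => ->.
Qed.

Lemma Fdelta n m (A : 'M[int]_(n,m)) x : F A (delta_mx 0 x) = \sum_k `|A x k|.
Proof. by apply: eq_bigr => k _; rewrite -rowE mxE. Qed.

Lemma Fdelta2 n m (A : 'M[int]_(n,m)) x y :
  F A (delta_mx 0 x + delta_mx 0 y) = \sum_k `|A x k + A y k|.
Proof. by apply: eq_bigr => k _; rewrite mulmxDl -!rowE !mxE. Qed.

Lemma entries n m1 m2 (A1 : 'M[int]_(n,m1)) (A2 : 'M[int]_(n,m2)) :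
  (forall x e, A1 x e = 0 \/ A1 x e = 1) ->
  (forall l, F A1 l = F A2 l) ->
  (forall x y, \sum_k A1 x k * A1 y k = \sum_k A2 x k * A2 y k) ->
  (forall x k, A2 x k = 0 \/ A2 x k = 1 \/ A2 x k = -1) /\
  (forall x y k, A2 x k = 1 -> A2 y k = -1 -> False).
Proof.
move=> h01 hF hg.
have sq x : \sum_k `|A2 x k| = \sum_k A2 x k * A2 x k.
  rewrite -Fdelta -hF Fdelta -hg.
  by apply: eq_bigr => e _; case: (h01 x e) => ->.
have e1 : forall x k, A2 x k = 0 \/ A2 x k = 1 \/ A2 x k = -1.
  move=> x k.
  have hnn : forall k, true -> 0 <= A2 x k * A2 x k - `|A2 x k| by move=> j _; nia.
  have h0 : \sum_k (A2 x k * A2 x k - `|A2 x k|) = 0 by rewrite sumrB sq subrr.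
  have := psumr_eq0P hnn h0 (i:=k) isT; nia.
split => // x y k hx hy.
have hnn : forall k, true -> 0 <= `|A2 x k| + `|A2 y k| - `|A2 x k + A2 y k|.
  by move=> j _; rewrite subr_ge0 ler_normD.
have h0 : \sum_k (`|A2 x k| + `|A2 y k| - `|A2 x k + A2 y k|) = 0.
  rewrite sumrB big_split /= -!Fdelta -Fdelta2 -!hF !Fdelta Fdelta2 -big_split /=.
  apply/eqP; rewrite subr_eq0; apply/eqP; apply: eq_bigr => e _.
  by case: (h01 x e) => ->; case: (h01 y e) => ->.
have := psumr_eq0P hnn h0 (i:=k) isT; rewrite hx hy; lia.
Qed.

Unset Implicit Arguments.
Theorem proposition2p8 (n m1 m2 : nat) (G : 'M[rat]_n)
    (A1 : 'M[int]_(n, m1)) (A2 : 'M[int]_(n, m2)) :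
  is_lattice G ->
  lattice_embedding G 1%:M A1 ->
  lattice_embedding G 1%:M A2 ->
  (forall i j, A1 i j = 0 \/ A1 i j = 1) ->
  (forall j : 'I_m1, exists i : 'I_n, A1 i j != 0) ->
  induces_short_surj G 1%:M A1 ->
  induces_short_surj G 1%:M A2 ->
  exists C : 'M[int]_(m1, m2),
    lattice_embedding 1%:M 1%:M C /\ A2 = A1 *m C.
Proof.
move=> [_ GU] e1 e2 h01 hnz s1 s2.
have c12 := cube GU s1 s2; have c21 := cube GU s2 s1.
have hF l : F A1 l = F A2 l.
  by apply/eqP; rewrite eq_le (Fle c21) (Fle c12).
have hg x y : \sum_k A1 x k * A1 y k = \sum_k A2 x k * A2 y k.
  by apply: (@intr_inj rat); rewrite -(gram e1) -(gram e2).
have [hE hS] := entries h01 hF hg.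
pose s (k : 'I_m2) : int := if [exists x, A2 x k == -1] then -1 else 1.
have ss k : s k * s k = 1 by rewrite /s; case: ifP.
pose A2' := \matrix_(x, k) (s k * A2 x k).
have h01' x k : A2' x k = 0 \/ A2' x k = 1.
  rewrite mxE /s; case: ifP.
    move=> /existsP [x0 /eqP hx0].
    have : A2 x k != 1 by apply/eqP => h1; apply: (hS x x0 k).
    case: (hE x k) => [->|[->|->]] //; by [left; rewrite mulr0 | right].
  move=> /negbT; rewrite negb_exists => /forallP /(_ x) hx.
  case: (hE x k) => [->|[->|h]]; [by left | by right | by rewrite h eqxx in hx].
have hF' l : F A1 l = F A2' l.
  rewrite hF; apply: eq_bigr => k _.
  have -> : (l *m A2') 0 k = s k * (l *m A2) 0 k.
    by rewrite !mxE mulr_sumr; apply: eq_bigr => x _; rewrite ?mxE; ring.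
  rewrite normrM.
  have -> : `|s k| = 1 by rewrite /s; case: ifP.
  by rewrite mul1r.
have [f [finj hf hz]] := key01 h01 h01' hF' hnz.
pose C := \matrix_(e, k) (if f e == k then s k else 0) : 'M[int]_(m1, m2).
have hCC : C *m C^T = 1%:M.
  apply/matrixP => e e'; rewrite !mxE (bigD1 (f e)) //= big1.
    rewrite !mxE eqxx addr0 (inj_eq finj) eq_sym; case: eqP => _; by [exact: ss | rewrite mulr0].
  by move=> k hk; rewrite !mxE eq_sym (negbTE hk) mul0r.
have hA : A2 = A1 *m C.
  apply/matrixP => x k; rewrite mxE.
  case: (pickP (fun e => f e == k)) => [e /eqP he | hn].
    rewrite (bigD1 e) //= big1.
      rewrite mxE he eqxx addr0 -hf he mxE mulrC mulrA (ss k) mul1r //.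
    move=> e' he'; rewrite mxE; case: eqP; last by rewrite mulr0.
    by move=> h; rewrite -he in h; have := finj _ _ h; move/eqP: he' => he' /he'.
  rewrite big1; last by move=> e _; rewrite mxE hn mulr0.
  have := hz k (fun e => negbT (hn e)) x; rewrite mxE => /eqP.
  rewrite mulf_eq0 => /orP [/eqP h|/eqP //]; by have := ss k; rewrite h mul0r.
exists C; split => //; split.
  move=> y z h; have := congr1 (fun X => X *m C^T) h.
  by rewrite -!mulmxA hCC !mulmx1.
move=> y z; rewrite /bil !mulmx1 -!ratmT -!ratmM trmx_mul.
by rewrite mulmxA -(mulmxA y) hCC mulmx1.
Qed.
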